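(* Let $n\ge2$ and let $\mathcal{S}$ be a set of two-factor interactions among factors $F_1,\dots,F_n$ such that there is no sequence of distinct factors $G_1,\dots,G_m$ ($m\ge3$) with $G_1G_2,\dots,G_{m-1}G_m,G_mG_1\in\mathcal{S}$ (i.e. the requirements graph is acyclic). If every factor appears in at most four interactions of $\mathcal{S}$, then there exists a blocked $2^n$ factorial in blocks of size four whose generator matrix has all columns nonzero (so all main effects are estimable), from which all interactions in $\mathcal{S}$ are estimable, and whose number of estimable two-factor interactions equals $\phi_{\max}=\binom n2-vw-3\binom v2$, where $n=3v+w$, $v=\lfloor n/3\rfloor$, $w\in\{0,1,2\}$.
   Context: A blocked $2^n$ factorial in blocks of size four is specified by a $2\times n$ generator matrix $X$ over $\mathrm{GF}(2)$ of rank $2$: the principal block is the row space of $X$ and the other blocks are its cosets in $\mathrm{GF}(2)^n$. An effect of a set $S$ of factors, with contrast $(-1)^{\sum_{j\in S}x_j}$, is estimable iff its contrast sums to zero over every block; equivalently $F_jF_k$ is estimable iff columns $j,k$ of $X$ differ, and the main effect of $F_j$ is estimable iff column $j$ is nonzero. *)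

(* Defs.v *)
From HB Require Import structures.
From mathcomp Require Import all_boot all_order all_algebra.
Set Implicit Arguments. Unset Strict Implicit. Unset Printing Implicit Defensive.
Import GRing.Theory.

(* A blocked 2^n factorial in blocks of size four: a 2 x n generator matrix
   over GF(2) of rank 2. Factors F_1..F_n are indexed by 'I_n. *)
Definition blocked_design (n : nat) (X : 'M['F_2]_(2, n)) : Prop :=
  \rank X = 2.

Definition main_estimable n (X : 'M['F_2]_(2, n)) (j : 'I_n) : bool :=
  col j X != 0%R.

Definition int_estimable n (X : 'M['F_2]_(2, n)) (j k : 'I_n) : bool :=
  col j X != col k X.

Definition is_2fi n (e : {set 'I_n}) : bool := #|e| == 2.

Definition int_estimable_set n (X : 'M['F_2]_(2, n)) (e : {set 'I_n}) : bool :=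
  [exists j, exists k, [&& j \in e, k \in e & int_estimable X j k]].

Definition num_estimable_2fi n (X : 'M['F_2]_(2, n)) : nat :=
  #|[set e : {set 'I_n} | is_2fi e && int_estimable_set X e]|.

Definition req_adj n (S : {set {set 'I_n}}) : rel 'I_n :=
  fun x y => [set x; y] \in S.

Definition req_acyclic n (S : {set {set 'I_n}}) : Prop :=
  forall s : seq 'I_n, 3 <= size s -> uniq s -> ~~ cycle (req_adj S) s.

Definition req_degree n (S : {set {set 'I_n}}) (j : 'I_n) : nat :=
  #|[set e in S | j \in e]|.

Definition phi_max (n : nat) : nat :=
  let v := n %/ 3 in let w := n %% 3 in
  'C(n, 2) - v * w - 3 * 'C(v, 2).

(* Main.v *)
Require Import Defs.
From HB Require Import structures.
From mathcomp Require Import all_boot all_order all_algebra.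
From mathcomp Require Import zify.
From Stdlib Require Import Classical.
Set Implicit Arguments. Unset Strict Implicit. Unset Printing Implicit Defensive.

Lemma adjC n (S : {set {set 'I_n}}) x y : req_adj S x y = req_adj S y x.
Proof. by rewrite /req_adj setUC. Qed.

Lemma adj_irr n (S : {set {set 'I_n}}) x :
  (forall e, e \in S -> is_2fi e) -> ~~ req_adj S x x.
Proof.
move=> H2; apply/negP => /H2; rewrite /is_2fi setUid cards1. by [].
Qed.

Lemma noback n (S : {set {set 'I_n}}) x y s1 s2 : req_acyclic S ->
  path (req_adj S) x (s1 ++ y :: s2) -> uniq (x :: s1 ++ y :: s2) ->
  s1 != [::] -> ~~ req_adj S y x.
Proof.
move=> Hac Hp Hu Hs1; apply/negP => hyx.
have Hsz : 3 <= size (x :: rcons s1 y) by rewrite /= size_rcons; case: s1 Hs1 {Hp Hu}.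
have Hu' : uniq (x :: rcons s1 y).
  move: Hu; rewrite -cats1 -(cat1s y s2) catA /= => /andP[hx].
  rewrite cat_uniq => /andP[-> _]; rewrite andbT.
  by apply: contra hx => h; rewrite mem_cat h.
apply: (negP (Hac _ Hsz Hu')).
rewrite /= rcons_path last_rcons hyx andbT.
by move: Hp; rewrite cat_path /= rcons_path => /andP[-> /andP[-> _]].
Qed.

Lemma onpath n (S : {set {set 'I_n}}) x p r y : req_acyclic S ->
  path (req_adj S) x (p :: r) -> uniq (x :: p :: r) -> y \in r -> ~~ req_adj S x y.
Proof.
move=> Hac Hp Hu yr; case/splitPr: yr Hp Hu => r1 r2 Hp Hu.
by rewrite adjC; apply: (@noback n S x y (p :: r1) r2).
Qed.

Lemma maxP (P : nat -> Prop) N : (exists m, P m) -> (forall m, P m -> m <= N) ->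
  exists m, P m /\ forall k, P k -> k <= m.
Proof.
elim: N => [|N IH] [m Pm] HN.
  by exists m; split => // k /HN; rewrite leqn0 => /eqP ->.
have [PN|nPN] := classic (P N.+1).
  by exists N.+1; split.
apply: IH; first by exists m.
move=> k Pk; have := HN k Pk; rewrite leq_eqVlt => /orP[/eqP Ek|//].
by rewrite Ek in Pk.
Qed.

Definition valid n (S : {set {set 'I_n}}) (U : {set 'I_n}) x t :=
  [&& uniq (x :: t), all (fun z => z \in U) (x :: t) & path (req_adj S) x t].

Lemma maxpath n (S : {set {set 'I_n}}) (U : {set 'I_n}) x0 : x0 \in U ->
  exists x t, valid S U x t /\ forall x' t', valid S U x' t' -> size t' <= size t.
Proof.
move=> x0U.
have Hex : exists m, (fun m => exists x t, valid S U x t /\ size t = m) m.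
  by exists 0, x0, [::]; rewrite /valid /= x0U.
have Hb : forall m, (fun m => exists x t, valid S U x t /\ size t = m) m -> m <= n.
  move=> k [x [t [/and3P[Hu _ _] <-]]].
  have := max_card (mem (x :: t)); rewrite card_ord (card_uniqP Hu) /=.
  by move/ltnW.
have [m [[x [t [Hv Hs]]] Hm]] := maxP Hex Hb.
exists x, t; split => // x' t' Hv'; rewrite Hs; apply: Hm; by exists x', t'.
Qed.

Lemma F1 n (S : {set {set 'I_n}}) (U : {set 'I_n}) x p r y :
  (forall e, e \in S -> is_2fi e) -> req_acyclic S ->
  valid S U x (p :: r) ->
  (forall x' t', valid S U x' t' -> size t' <= size (p :: r)) ->
  y \in U -> req_adj S x y -> y = p.
Proof.
move=> H2 Hac /and3P[Hu Ha Hp] Hmax yU hxy.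
have [ys|yns] := boolP (y \in x :: p :: r); last first.
  have : valid S U y (x :: p :: r).
    apply/and3P; split; first by rewrite cons_uniq yns Hu.
      by rewrite -cat1s all_cat Ha andbT /= yU.
    by rewrite -cat1s cat_path Hp /= adjC hxy.
  by move/Hmax; rewrite /= ltnn.
move: ys; rewrite !inE => /or3P[/eqP yx|/eqP //|yr].
  by move: hxy; rewrite yx (negbTE (adj_irr _ H2)).
by have := onpath Hac Hp Hu yr; rewrite hxy.
Qed.

Lemma notin3 n (a b c y : 'I_n) : y \notin [set a; b; c] -> [/\ y != a, y != b & y != c].
Proof. by rewrite !inE; case: (y == a); case: (y == b); case: (y == c). Qed.

Lemma Osub n (S : {set {set 'I_n}}) (U T B : {set 'I_n}) t :
  (forall y, y \in U -> y \notin T -> req_adj S t y -> y \in B) ->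
  #|[set y in U :\: T | req_adj S t y]| <= #|B|.
Proof.
move=> H; apply: subset_leq_card; apply/subsetP => y.
by rewrite !inE => /andP[/andP[yT yU] hy]; apply: H.
Qed.

Lemma O0 n (S : {set {set 'I_n}}) (U T : {set 'I_n}) t :
  (forall y, y \in U -> y \notin T -> req_adj S t y -> False) -> forall k,
  #|[set y in U :\: T | req_adj S t y]| <= k.
Proof.
move=> H k; apply: leq_trans (_ : _ <= #|(set0 : {set 'I_n})|) _; last by rewrite cards0.
by apply: Osub => y yU yT hy; case: (H y yU yT hy).
Qed.

Lemma valid_in n (S : {set {set 'I_n}}) (U : {set 'I_n}) x t y :
  valid S U x t -> y \in x :: t -> y \in U.
Proof. by case/and3P => _ /allP H _ /H. Qed.

Lemma nbr_deg n (S : {set {set 'I_n}}) x : (forall e, e \in S -> is_2fi e) ->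
  req_degree S x <= 4 -> #|[set y | req_adj S x y]| <= 4.
Proof.
move=> H2 Hd; apply: leq_trans Hd; rewrite /req_degree.
rewrite -(@card_in_imset _ _ (fun y => [set x; y])); last first.
  move=> y1 y2; rewrite !inE => h1 h2 E.
  have : y1 \in [set x; y2] by rewrite -E !inE eqxx orbT.
  rewrite !inE => /orP[/eqP e|/eqP //].
  by move: h1; rewrite e (negbTE (adj_irr _ H2)).
apply: subset_leq_card; apply/subsetP => e /imsetP[y]; rewrite !inE => hy ->.
by rewrite -[_ \in S]/(req_adj S x y) hy !inE eqxx.
Qed.

Lemma leaf n (S : {set {set 'I_n}}) (W : {set 'I_n}) :
  (forall e, e \in S -> is_2fi e) -> req_acyclic S -> W != set0 ->
  exists z, z \in W /\ #|[set y in W | req_adj S z y]| <= 1.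
Proof.
move=> H2 Hac /set0Pn [x0 x0W].
have [x [t [Hv Hmax]]] := maxpath S x0W.
exists x; split; first by apply: (valid_in Hv); rewrite inE eqxx.
case: t Hv Hmax => [|p r] Hv Hmax.
  apply: leq_trans (_ : #|(set0 : {set 'I_n})| <= 1); last by rewrite cards0.
  apply: subset_leq_card; apply/subsetP => y; rewrite !inE => /andP[yW hxy].
  have : valid S W x [:: y].
    apply/and3P; split.
    - rewrite /= inE andbT; apply: contraL hxy => /eqP <-; exact: adj_irr.
    - by rewrite /= yW (valid_in Hv) // inE eqxx.
    - by rewrite /= hxy.
  by move/Hmax.
rewrite -(cards1 p); apply: subset_leq_card; apply/subsetP => y.
rewrite !inE => /andP[yW hxy]; apply/eqP; exact: (F1 H2 Hac Hv Hmax yW hxy).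
Qed.

Lemma three n (U : {set 'I_n}) : 3 <= #|U| ->
  exists a b c, [/\ a \in U, b \in U, c \in U & [&& a != b, a != c & b != c]].
Proof.
move=> H.
have [a aU] : exists a, a \in U by apply/card_gt0P; exact: leq_trans H.
have [b bU] : exists b, b \in U :\ a.
  by apply/card_gt0P; have := cardsD1 a U; rewrite aU; lia.
have [c cU] : exists c, c \in U :\ a :\ b.
  by apply/card_gt0P; have := cardsD1 b (U :\ a); have := cardsD1 a U; rewrite aU bU; lia.
move: bU cU; rewrite !inE => /andP[ba bU] /and3P[cb ca cU].
by exists a, b, c; rewrite aU bU cU eq_sym ba eq_sym ca eq_sym cb.
Qed.

Lemma triple n (S : {set {set 'I_n}}) (U : {set 'I_n}) :
  (forall e, e \in S -> is_2fi e) -> req_acyclic S ->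
  (forall j, req_degree S j <= 4) -> 3 <= #|U| ->
  exists t1 t2 t3, [/\ [/\ t1 \in U, t2 \in U & t3 \in U],
   [&& t1 != t2, t1 != t3 & t2 != t3],
   #|[set y in U :\: [set t1; t2; t3] | req_adj S t1 y]| <= 2,
   #|[set y in U :\: [set t1; t2; t3] | req_adj S t2 y]| <= 1 &
   #|[set y in U :\: [set t1; t2; t3] | req_adj S t3 y]| <= 0].
Proof.
move=> H2 Hac Hdeg HU.
have [x0 x0U] : exists x0, x0 \in U by apply/card_gt0P; exact: leq_trans HU.
have [x [t [Hv Hmax]]] := maxpath S x0U.
have xU : x \in U by apply: (valid_in Hv); rewrite inE eqxx.
destruct t as [|p r].
  have noE : forall a b, a \in U -> b \in U -> ~~ req_adj S a b.
    move=> a b aU bU; apply/negP => hab.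
    have : valid S U a [:: b].
      apply/and3P; split.
      - rewrite /= inE andbT; apply: contraL hab => /eqP ->; exact: adj_irr.
      - by rewrite /= aU bU.
      - by rewrite /= hab.
    by move/Hmax.
  have [a [b [c [aU bU cU D]]]] := three HU.
  exists a, b, c; split => //; apply: O0 => y yU _ h.
  - by rewrite (negbTE (noE _ _ aU yU)) in h.
  - by rewrite (negbTE (noE _ _ bU yU)) in h.
  - by rewrite (negbTE (noE _ _ cU yU)) in h.
move: (Hv) => /and3P[Hu Ha Hp].
have pU : p \in U by apply: (valid_in Hv); rewrite !inE eqxx orbT.
have hxp : req_adj S x p by case/andP: Hp.
have Hpr : path (req_adj S) p r by case/andP: Hp.
have xp : x != p by move: Hu; rewrite /= inE negb_or => /andP[/andP[]].
have Ox : forall T : {set 'I_n}, p \in T -> forall y, y \in U -> y \notin T -> req_adj S x y -> False.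
  move=> T pT y yU yT hxy; have e := F1 H2 Hac Hv Hmax yU hxy.
  by rewrite e pT in yT.
have [[q [qU [hpq qs]]] | noq] :=
  classic (exists q, q \in U /\ req_adj S p q /\ q \notin x :: p :: r).
  have pq : p != q by apply: contraNneq qs => <-; rewrite !inE eqxx orbT.
  have qx : q != x by apply: contraNneq qs => ->; rewrite !inE eqxx.
  exists p, q, x; split.
  - by split.
  - by rewrite pq eq_sym xp qx.
  - apply: leq_trans (Osub (B := [set y | req_adj S p y] :\: [set x; q]) _) _.
      move=> y yU yT hy; have [y1 y2 y3] := notin3 yT.
      by rewrite !inE hy negb_or y3 y2.
    rewrite cardsD (setIidPr _); last first.
      by apply/subsetP => y; rewrite !inE => /orP[/eqP->|/eqP->] //; rewrite adjC.
    by rewrite cards2 eq_sym qx leq_subLR (leq_trans (nbr_deg H2 (Hdeg p))).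
  - apply: O0 => y yU yT hqy; have [y1 y2 y3] := notin3 yT.
    have Hqu : uniq (q :: p :: r).
      rewrite cons_uniq; apply/andP; split; last by case/andP: Hu.
      by apply: contra qs => h; rewrite inE h orbT.
    have [ys|yns] := boolP (y \in x :: p :: r).
      move: ys; rewrite !inE (negbTE y3) (negbTE y1) /= => yr.
      have Hq : path (req_adj S) q (p :: r) by rewrite /= adjC hpq Hpr.
      by have := onpath Hac Hq Hqu yr; rewrite hqy.
    have : valid S U y (q :: p :: r).
      apply/and3P; split.
      - rewrite cons_uniq Hqu andbT inE negb_or y2 /=.
        by apply: contra yns => h; rewrite inE h orbT.
      - rewrite -cat1s all_cat /= yU qU; move: Ha; rewrite -cat1s all_cat.
        by case/andP.
      - by rewrite /= adjC hqy adjC hpq Hpr.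
    by move/Hmax; rewrite /= ltnn.
  - apply: O0 => y yU yT hxy; apply: (Ox _ _ y yU yT hxy); rewrite !inE eqxx.
    by rewrite ?orbT.
set W := U :\: [set x; p].
have W0 : W != set0.
  rewrite -card_gt0 cardsD (setIidPr _) ?cards2 ?xp; first by rewrite subn_gt0.
  by apply/subsetP => y; rewrite !inE => /orP[/eqP->|/eqP->].
have [z [zW Hz]] := leaf H2 Hac W0.
move: (zW); rewrite !inE negb_or => /andP[/andP[zx zp] zU].
exists z, p, x; split.
- by split.
- by rewrite zp zx eq_sym xp.
- apply: leq_trans (Osub (B := [set y in W | req_adj S z y]) _) (leq_trans Hz _) => //.
  move=> y yU yT hy; have [y1 y2 y3] := notin3 yT.
  by rewrite !inE hy negb_or y3 y2 yU.
- apply: leq_trans (Osub (B := [set head p r]) _) _; last by rewrite cards1.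
  move=> y yU yT hpy; have [y1 y2 y3] := notin3 yT.
  have ys : y \in x :: p :: r.
    by apply/negPn/negP => yns; apply: noq; exists y.
  move: ys; rewrite !inE (negbTE y3) (negbTE y2) /= => yr.
  destruct r as [|p2 r']; first by [].
  move: yr; rewrite inE => /orP[/eqP->|yr']; first by rewrite /=.
  have Hu' : uniq (p :: p2 :: r') by case/andP: Hu.
  by have := onpath Hac Hpr Hu' yr'; rewrite hpy.
- apply: O0 => y yU yT hxy; apply: (Ox _ _ y yU yT hxy); rewrite !inE eqxx.
  by rewrite ?orbT.
Qed.

Lemma avoid (F : {set 'I_3}) : #|F| < 3 -> exists c, c \notin F.
Proof.
move=> H; have : 0 < #|~: F| by have := cardsC F; rewrite card_ord; lia.
by case/card_gt0P => c; rewrite inE; exists c.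
Qed.

Lemma pick3 (F1 F2 F3 : {set 'I_3}) : #|F1| <= 2 -> #|F2| <= 1 -> #|F3| <= 0 ->
  exists c1 c2 c3, [/\ c1 \notin F1, c2 \notin F2, c3 \notin F3 &
                      [&& c1 != c2, c1 != c3 & c2 != c3]].
Proof.
move=> h1 h2 h3.
have [c1 n1] := avoid h1.
have [c2 n2] : exists c, c \notin F2 :|: [set c1].
  apply: avoid; apply: leq_ltn_trans (leq_card_setU _ _) _; rewrite cards1; lia.
have [c3 n3] : exists c, c \notin F3 :|: [set c1; c2].
  apply: avoid; apply: leq_ltn_trans (leq_card_setU _ _) _.
  by apply: leq_ltn_trans (leq_add h3 (leqnn _)) _; rewrite cards2; case: (c1 != c2).
move: n2 n3; rewrite !inE !negb_or => /andP[n2 d21] /andP[n3 /andP[d31 d32]].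
exists c1, c2, c3; split => //.
by rewrite eq_sym d21 eq_sym d31 eq_sym d32.
Qed.

Lemma sum3 (c1 c2 c3 c : 'I_3) : [&& c1 != c2, c1 != c3 & c2 != c3] ->
  (c1 == c) + (c2 == c) + (c3 == c) = 1.
Proof.
by case: c1 => [[|[|[|?]]] ?]; case: c2 => [[|[|[|?]]] ?];
   case: c3 => [[|[|[|?]]] ?]; case: c => [[|[|[|?]]] ?].
Qed.

Lemma count_del n (U : {set 'I_n}) (g : 'I_n -> 'I_3) a c : a \in U ->
  #|[set x in U | g x == c]| = (g a == c) + #|[set x in U :\ a | g x == c]|.
Proof.
move=> aU; rewrite (cardsD1 a [set x in U | g x == c]) inE aU /=.
congr (_ + _); apply: eq_card => x; rewrite !inE andbA.
by case: (x != a); case: (x \in U).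
Qed.

Lemma count_ext n (U : {set 'I_n}) (g f : 'I_n -> 'I_3) c : {in U, g =1 f} ->
  [set x in U | g x == c] = [set x in U | f x == c].
Proof.
move=> H; apply/setP => x; rewrite !inE; case xU: (x \in U) => //=.
by rewrite H.
Qed.

Lemma in3 n (a b c y : 'I_n) : y \in [set a; b; c] -> [\/ y = a, y = b | y = c].
Proof.
rewrite !inE => /orP[/orP[/eqP->|/eqP->]|/eqP->]; by [constructor 1|constructor 2|constructor 3].
Qed.

Lemma card3 n (a b c : 'I_n) : [&& a != b, a != c & b != c] -> #|[set a; b; c]| = 3.
Proof.
case/and3P => ab ac bc.
by rewrite -setUA cardsU1 cards2 bc !inE negb_or ab ac.
Qed.

Lemma coloring n (S : {set {set 'I_n}}) (U : {set 'I_n}) :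
  (forall e, e \in S -> is_2fi e) -> req_acyclic S ->
  (forall j, req_degree S j <= 4) ->
  exists f : 'I_n -> 'I_3,
    (forall x y, x \in U -> y \in U -> req_adj S x y -> f x != f y) /\
    forall c : 'I_3, #|[set x in U | f x == c]| = #|U| %/ 3 + (c < #|U| %% 3).
Proof.
move=> H2 Hac Hdeg.
have [m] := ubnP #|U|; elim: m U => // m IH U HUm.
have [HU3|HU3] := leqP 3 #|U|.
  have [t1 [t2 [t3 [[t1U t2U t3U] D O1 O2 O3]]]] := triple H2 Hac Hdeg HU3.
  set T := [set t1; t2; t3] in O1 O2 O3.
  set U0 := U :\: T.
  have TU : T \subset U.
    by apply/subsetP => y /in3[]->.
  have HU0 : #|U0| + 3 = #|U|.
    rewrite /U0 cardsD (setIidPr TU) card3 //.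
    by have := subset_leq_card TU; rewrite card3 //; lia.
  have [f [Hf Hc]] := IH U0 ltac:(lia).
  have [c1 [c2 [c3 [n1 n2 n3 Dc]]]] :=
    pick3 (leq_trans (leq_imset_card f _) O1) (leq_trans (leq_imset_card f _) O2)
          (leq_trans (leq_imset_card f _) O3).
  set g := fun x => if x == t1 then c1 else if x == t2 then c2
                    else if x == t3 then c3 else f x.
  case/and3P: (D) => d12 d13 d23.
  have gout : forall y, y \notin T -> g y = f y.
    move=> y /notin3 [y1 y2 y3]; by rewrite /g (negbTE y1) (negbTE y2) (negbTE y3).
  have g1 : g t1 = c1 by rewrite /g eqxx.
  have g2 : g t2 = c2 by rewrite /g eq_sym (negbTE d12) eqxx.
  have g3 : g t3 = c3 by rewrite /g eq_sym (negbTE d13) eq_sym (negbTE d23) eqxx.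
  have claim : forall x y, y \in U -> req_adj S x y -> x \in T -> g x != g y.
    move=> x y yU hxy xT.
    have [yT|yT] := boolP (y \in T).
      case/and3P: (Dc) => e12 e13 e23.
      move: hxy; move: xT yT => /in3[]-> /in3[]-> hxy; rewrite ?g1 ?g2 ?g3;
        first [by [] | by rewrite eq_sym | by move: hxy; rewrite (negbTE (adj_irr _ H2))].
    have yU0 : y \in U0 by rewrite /U0 inE yT yU.
    rewrite (gout _ yT).
    move: xT => /in3[] xe; subst x;
      rewrite ?g1 ?g2 ?g3.
    - by apply: contra n1 => /eqP ->; apply: imset_f; rewrite inE yU0 hxy.
    - by apply: contra n2 => /eqP ->; apply: imset_f; rewrite inE yU0 hxy.
    - by apply: contra n3 => /eqP ->; apply: imset_f; rewrite inE yU0 hxy.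
  exists g; split.
    move=> x y xU yU hxy.
    have [xT|xT] := boolP (x \in T); first exact: claim.
    have [yT|yT] := boolP (y \in T).
      by rewrite eq_sym; apply: claim => //; rewrite adjC.
    rewrite (gout _ xT) (gout _ yT); apply: Hf => //.
    - by rewrite /U0 inE xT xU.
    - by rewrite /U0 inE yT yU.
  move=> c.
  have t2U' : t2 \in U :\ t1 by rewrite !inE eq_sym d12 t2U.
  have t3U' : t3 \in U :\ t1 :\ t2 by rewrite !inE eq_sym d23 eq_sym d13 t3U.
  rewrite (count_del _ _ t1U) (count_del _ _ t2U') (count_del _ _ t3U') g1 g2 g3.
  have -> : [set x in U :\ t1 :\ t2 :\ t3 | g x == c] = [set x in U0 | f x == c].
    apply/setP => x; rewrite !inE.
    have [xT|xT] := boolP (x \in T).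
      by move: xT => /in3[]->; rewrite !eqxx /= ?orbT ?andbF /= ?andbF.
    have [x1 x2 x3] := notin3 xT.
    by rewrite x1 x2 x3 (gout _ xT) /= (negbTE x1) (negbTE x2) (negbTE x3).
  rewrite Hc !addnA sum3 // -HU0.
  set k := #|U0|.
  by rewrite modnDr divnDr ?dvdnn // divnn /= (addnC 1).
have [HU0|HU0] := posnP #|U|.
  exists (fun _ => ord0); split.
    by move=> x y xU; rewrite (cards0_eq HU0) inE in xU.
  move=> c; have E := cards0_eq HU0; rewrite E cards0 div0n mod0n ltn0 addn0.
  apply/eqP; rewrite cards_eq0; apply/eqP/setP => x; rewrite !inE.
  by [].
have [a aU] : exists a, a \in U by apply/card_gt0P.
set U0 := U :\ a.
have HU0' : #|U| = #|U0|.+1 by rewrite (cardsD1 a U) aU.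
have [f [Hf Hc]] := IH U0 ltac:(lia).
have k1 : #|U0| <= 1 by lia.
set w : 'I_3 := inord #|U0|.
have wv : nat_of_ord w = #|U0| by rewrite /w inordK //; apply: leq_ltn_trans k1 _.
have wfree : forall y, y \in U0 -> f y != w.
  move=> y yU0; apply/negP => /eqP fy.
  have := Hc w; rewrite wv.
  have -> : #|U0| %/ 3 = 0 by rewrite divn_small //; lia.
  have -> : #|U0| %% 3 = #|U0| by rewrite modn_small //; lia.
  rewrite ltnn addn0 => /eqP; rewrite cards_eq0 => /eqP /setP /(_ y).
  by rewrite in_set yU0 fy eqxx in_set0.
set g := fun x => if x == a then w else f x.
exists g; split.
  move=> x y xU yU hxy; rewrite /g.
  have [xa|xa] := eqVneq x a; have [ya|ya] := eqVneq y a.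
  - by subst; rewrite (negbTE (adj_irr _ H2)) in hxy.
  - by subst x; rewrite eq_sym; apply: wfree; rewrite !inE ya yU.
  - by subst y; apply: wfree; rewrite !inE xa xU.
  - by apply: Hf => //; rewrite !inE ?xa ?ya.
move=> c; rewrite (count_del _ _ aU).
have -> : [set x in U :\ a | g x == c] = [set x in U0 | f x == c].
  by apply: count_ext => x; rewrite !inE /g => /andP[/negbTE -> _].
rewrite Hc HU0' /g eqxx -val_eqE /= wv.
case: c => c hc /=.
move: k1; case: (#|U0|) => [|[|k]] // _; case: c hc => [|[|[|c]]] //.
Qed.

Definition vcol (c : 'I_3) (i : 'I_2) : 'F_2 :=
  if val c == 0%N then ((val i == 0%N)%:R)%R
  else if val c == 1%N then ((val i == 1%N)%:R)%R else 1%R.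

Definition i1 : 'I_2 := @Ordinal 2 1 erefl.

Lemma vcol_inj (a b : 'I_3) : vcol a ord0 = vcol b ord0 -> vcol a i1 = vcol b i1 -> a = b.
Proof.
case: a => [[|[|[|?]]] ?]; case: b => [[|[|[|?]]] ?] //; rewrite /vcol /=;
  try (move=> /eqP; by []); try (move=> _ /eqP; by []); try (by move=> *; apply: val_inj).
Qed.

Lemma vcol_nz (a : 'I_3) : vcol a ord0 != 0%R \/ vcol a i1 != 0%R.
Proof. case: a => [[|[|[|?]]] ?] //; rewrite /vcol /=; by [left|right]. Qed.

Definition Xof n (f : 'I_n -> 'I_3) : 'M['F_2]_(2, n) := \matrix_(i < 2, j < n) vcol (f j) i.

Lemma colX n (f : 'I_n -> 'I_3) j k : (col j (Xof f) == col k (Xof f)) = (f j == f k).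
Proof.
apply/eqP/eqP => [E|E].
  apply: vcol_inj.
  - by have := congr1 (fun M : 'M['F_2]_(2,1) => M ord0 ord0) E; rewrite !mxE.
  - by have := congr1 (fun M : 'M['F_2]_(2,1) => M i1 ord0) E; rewrite !mxE.
by apply/matrixP => i l; rewrite !mxE E.
Qed.

Lemma mainX n (f : 'I_n -> 'I_3) j : col j (Xof f) != 0%R.
Proof.
apply/eqP => E; case: (vcol_nz (f j)) => /eqP; apply.
- by have := congr1 (fun M : 'M['F_2]_(2,1) => M ord0 ord0) E; rewrite !mxE.
- by have := congr1 (fun M : 'M['F_2]_(2,1) => M i1 ord0) E; rewrite !mxE.
Qed.

Definition Mof n (jj : 'I_2 -> 'I_n) : 'M['F_2]_(n, 2) :=
  \matrix_(l < n, k < 2) ((l == jj k)%:R)%R.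

Lemma rankX n (f : 'I_n -> 'I_3) j0 j1 : f j0 = ord0 -> f j1 = i1 :> nat ->
  \rank (Xof f) = 2.
Proof.
move=> h0 h1.
have j01 : j0 != j1 by apply/eqP => E; move: h1; rewrite -E h0.
set jj := fun k : 'I_2 => if k == ord0 then j0 else j1.
pose M : 'M['F_2]_(n, 2) := Mof jj.
apply/eqP; rewrite eqn_leq rank_leq_row /=.
apply: leq_trans (mxrankM_maxl (Xof f) M).
suff -> : (Xof f *m M = 1%:M)%R by rewrite mxrank1.
apply/matrixP => i k; rewrite !mxE (bigD1 (jj k)) //= big1 ?addr0; last first.
  by move=> l hl; rewrite !mxE (negbTE hl) GRing.mulr0.
rewrite !mxE eqxx GRing.mulr1.
have hf1 : f j1 = @Ordinal 3 1 erefl by apply: val_inj.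
case: i => [[|[|?]] ?]; case: k => [[|[|?]] ?] //; rewrite /jj /= ?h0 ?hf1 /vcol /=; by rewrite GRing.addr0.
Qed.

Definition o0 : 'I_3 := @Ordinal 3 0 erefl.
Definition o1 : 'I_3 := @Ordinal 3 1 erefl.
Definition o2 : 'I_3 := @Ordinal 3 2 erefl.

Lemma key3 (a b : 'I_3) : (a != b) =
  ~~ [|| (a == o0) && (b == o0), (a == o1) && (b == o1) | (a == o2) && (b == o2)].
Proof. by case: a => [[|[|[|?]]] ?]; case: b => [[|[|[|?]]] ?]. Qed.

Definition Mc n (f : 'I_n -> 'I_3) c :=
  [set e : {set 'I_n} | e \subset [set x | f x == c] & #|e| == 2].

Lemma est_key n (f : 'I_n -> 'I_3) (e : {set 'I_n}) : #|e| == 2 ->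
  int_estimable_set (Xof f) e =
  ~~ [|| e \in Mc f o0, e \in Mc f o1 | e \in Mc f o2].
Proof.
case/cards2P => a [b [ab ->]].
have sub : forall c, ([set a; b] \subset [set x | f x == c]) = (f a == c) && (f b == c).
  move=> c; apply/subsetP/andP => [H|[ha hb] y].
    by split; [have := H a | have := H b]; rewrite !inE eqxx ?orbT; apply.
  by rewrite !inE => /orP[]/eqP->.
rewrite /Mc !inE !sub cards2 ab /= !andbT -key3.
apply/existsP/idP => [[j /existsP [k /and3P[]]]|H].
  rewrite /int_estimable colX !inE.
  move=> /orP[]/eqP-> /orP[]/eqP->; rewrite ?eqxx //; by rewrite eq_sym.
by exists a; apply/existsP; exists b; rewrite /int_estimable colX !inE !eqxx ?orbT H.
Qed.

Lemma Mdisj n (f : 'I_n -> 'I_3) c d : c != d -> #|Mc f c :&: Mc f d| = 0.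
Proof.
move=> cd; apply/eqP; rewrite cards_eq0; apply/eqP/setP => e; rewrite !inE.
apply/negP => /andP[/andP[/subsetP sc /eqP h2] /andP[/subsetP sd _]].
have [x xe] : exists x, x \in e by apply/card_gt0P; rewrite h2.
have := sc x xe; have := sd x xe; rewrite !inE => /eqP-> /eqP E.
by rewrite E eqxx in cd.
Qed.

Lemma cardM n (f : 'I_n -> 'I_3) c : #|Mc f c| = 'C(#|[set x | f x == c]|, 2).
Proof. by rewrite -cards_draws. Qed.

Lemma count2fi n (f : 'I_n -> 'I_3) :
  num_estimable_2fi (Xof f) = 'C(n, 2) -
   ('C(#|[set x | f x == o0]|, 2) + 'C(#|[set x | f x == o1]|, 2) +
    'C(#|[set x | f x == o2]|, 2)).
Proof.
rewrite /num_estimable_2fi.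
set A := [set e : {set 'I_n} | #|e| == 2].
set B := Mc f o0 :|: Mc f o1 :|: Mc f o2.
have -> : [set e | is_2fi e && int_estimable_set (Xof f) e] = A :\: B.
  apply/setP => e; rewrite !inE /is_2fi.
  case h2: (#|e| == 2); rewrite /= ?andbF //.
  by rewrite (est_key f h2) /Mc !inE h2 !andbT orbA.
have BA : B \subset A.
  by apply/subsetP => e; rewrite /B /Mc !inE => /orP[/orP[]|] /andP[_ ->].
rewrite cardsD (setIidPr BA) /A card_draws card_ord.
congr (_ - _).
have d02 : #|Mc f o0 :&: Mc f o2| = 0 by apply: Mdisj.
have d12 : #|Mc f o1 :&: Mc f o2| = 0 by apply: Mdisj.
have d01 : #|Mc f o0 :&: Mc f o1| = 0 by apply: Mdisj.
rewrite /B cardsU setIUl cardsU d02 d12 cardsU d01.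
rewrite !cardM; lia.
Qed.

Lemma arith n : 'C(n, 2) -
   ('C(n %/ 3 + (o0 < n %% 3), 2) + 'C(n %/ 3 + (o1 < n %% 3), 2) +
    'C(n %/ 3 + (o2 < n %% 3), 2)) = phi_max n.
Proof.
rewrite /phi_max.
have : n %% 3 < 3 by rewrite ltn_mod.
set v := n %/ 3; set w := n %% 3.
have hb : 'C(v + 1, 2) = 'C(v, 2) + v by rewrite addn1 binS bin1.
case: w => [|[|[|w]]] //= _; rewrite ?addn0 ?hb; lia.
Qed.

Theorem corollary6 (n : nat) (S : {set {set 'I_n}}) :
  2 <= n ->
  (forall e, e \in S -> is_2fi e) ->
  req_acyclic S ->
  (forall j : 'I_n, req_degree S j <= 4) ->
  exists X : 'M['F_2]_(2, n),
    [/\ blocked_design X,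
        (forall j : 'I_n, main_estimable X j),
        (forall e, e \in S -> int_estimable_set X e) &
        num_estimable_2fi X = phi_max n].
Proof.
move=> Hn H2 Hac Hdeg.
have [f [Hf Hc]] := coloring [set: 'I_n] H2 Hac Hdeg.
rewrite cardsT card_ord in Hc.
have Cc : forall c, #|[set x | f x == c]| = n %/ 3 + (c < n %% 3).
  by move=> c; rewrite -Hc; apply: eq_card => x; rewrite !inE.
exists (Xof f); split.
- have [j0 hj0] : exists j, j \in [set x | f x == o0].
    by apply/card_gt0P; rewrite Cc /=; lia.
  have [j1 hj1] : exists j, j \in [set x | f x == o1].
    by apply/card_gt0P; rewrite Cc /=; lia.
  move: hj0 hj1; rewrite !inE => /eqP h0 /eqP h1.
  apply: (rankX (j0 := j0) (j1 := j1)); first by rewrite h0; apply: val_inj.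
  by rewrite h1.
- by move=> j; apply: mainX.
- move=> e eS; have := H2 e eS; rewrite /is_2fi => /cards2P [a [b [ab E]]].
  have hab : req_adj S a b by rewrite /req_adj -E.
  have := Hf a b (in_setT a) (in_setT b) hab => fab.
  apply/existsP; exists a; apply/existsP; exists b.
  by rewrite E /int_estimable colX !inE !eqxx ?orbT fab.
- by rewrite count2fi !Cc arith.
Qed.
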